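(* Let $S_1=\mathrm{diag}(1,-1,-1)$, $S_2=\mathrm{diag}(-1,1,-1)$, $S_3=\mathrm{diag}(-1,-1,1)$, and let $G$ be a finite group of $3\times 3$ unitary matrices containing $S_1,S_2,S_3$ and a matrix $T$. Let $c$ be one of the numbers $1/2$, $(\sqrt5+1)/4$, $(\sqrt5-1)/4$. Then: (i) for every $j\in\{1,2,3\}$, if $|T_{jj}|=c$ then $T_{jj}=c\,\xi$ for some root of unity $\xi$; (ii) for all $k\neq l$ in $\{1,2,3\}$, if $|T_{kl}T_{lk}|=\tfrac14$ then $T_{kl}T_{lk}=\xi'/4$ for some root of unity $\xi'$.
   Context: In the paper $T$ is an element of the residual charged-lepton symmetry group $G_\ell$, a subgroup of the finite flavour group $G$, and $G$ contains the Klein four-group $\{\mathbbm 1,S_1,S_2,S_3\}$. *)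

(* Defs.v *)
From HB Require Import structures.
From mathcomp Require Import all_boot all_order all_algebra.
From mathcomp Require Import complex.
From mathcomp Require Import reals.
Set Implicit Arguments. Unset Strict Implicit. Unset Printing Implicit Defensive.
Import Order.TTheory GRing.Theory Num.Theory.
Local Open Scope ring_scope.

Definition adjmx (R : realType) (A : 'M[R[i]]_3) : 'M[R[i]]_3 :=
  (map_mx Num.conj A)^T.

Definition unitary_mx (R : realType) (A : 'M[R[i]]_3) : Prop :=
  A *m adjmx A = 1%:M.

Definition finite_unitary_group (R : realType) (G : seq 'M[R[i]]_3) : Prop :=
  [/\ (1%:M : 'M[R[i]]_3) \in G,
      (forall A B, A \in G -> B \in G -> A *m B \in G),
      (forall A, A \in G -> invmx A \in G) &
      (forall A, A \in G -> unitary_mx A)].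

Definition is_root_of_unity (R : realType) (z : R[i]) : Prop :=
  exists n : nat, (0 < n)%N /\ z ^+ n = 1.

Definition S1 (R : realType) : 'M[R[i]]_3 :=
  \matrix_(i, j) (if i == j then (if i == 0 :> 'I_3 then 1 else -1) else 0).
Definition S2 (R : realType) : 'M[R[i]]_3 :=
  \matrix_(i, j) (if i == j then (if i == 1 :> 'I_3 then 1 else -1) else 0).
Definition S3 (R : realType) : 'M[R[i]]_3 :=
  \matrix_(i, j) (if i == j then (if i == 2 :> 'I_3 then 1 else -1) else 0).

Definition admissible_c (R : realType) (c : R[i]) : Prop :=
  c = 2^-1 \/ c = ((Num.sqrt (5 : R))%:C%C + 1) / 4
           \/ c = ((Num.sqrt (5 : R))%:C%C - 1) / 4.

(* Main.v *)
Require Import Defs.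
From HB Require Import structures.
From mathcomp Require Import all_boot all_order all_algebra all_field.
From mathcomp Require Import complex reals.
From mathcomp Require Import ring zify.
Import Order.TTheory GRing.Theory Num.Theory.
Local Open Scope ring_scope.
Set Implicit Arguments. Unset Strict Implicit.

Lemma pigeon (T : finType) (f : nat -> T) :
  exists i j, (i < j)%N /\ f i = f j.
Proof.
pose g (i : 'I_#|T|.+1) := f i.
have /injectivePn[i [j neq_ij eq_ij]] : ~~ injectiveb g.
  apply/negP=> /injectiveP inj; have := leq_card g inj.
  by rewrite card_ord ltnn.
case: (ltngtP i j) => [lt|lt|/val_inj e]; last by rewrite e eqxx in neq_ij.
- by exists i, j.
- by exists j, i.
Qed.


Section A.
Variable R : realType.
Local Notation C := (R[i]).

Lemma pow_in (G : seq 'M[C]_3) (X : 'M[C]_3) :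
  finite_unitary_group G -> X \in G -> forall k, X ^+ k \in G.
Proof.
case=> G1 GM _ _ XG; elim=> [|k IH]; first by rewrite expr0.
by rewrite exprS -mulmxE GM.
Qed.

Lemma fin_order (G : seq 'M[C]_3) (X : 'M[C]_3) :
  finite_unitary_group G -> X \in G -> exists n, (0 < n)%N /\ X ^+ n = 1.
Proof.
move=> fG XG; have PG := @pow_in G X fG XG.
have [i [j [lt_ij eq_ij]]] :=
  @pigeon _ (fun k => (inord (index (X ^+ k) G) : 'I_(size G).+1)).
have : index (X ^+ i) G = index (X ^+ j) G.
  by move/(congr1 val): eq_ij; rewrite /= !inordK // ltnS index_size.
move/(congr1 (nth 0 G)); rewrite !nth_index // => eXij.
have uX : X \is a GRing.unit.
  case: fG => _ _ _ /(_ X XG) U; by case: (mulmx1_unit U).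
exists (j - i)%N; split; first by rewrite subn_gt0.
apply: (mulrI (unitrX i uX)); rewrite -exprD subnKC ?(ltnW lt_ij) //.
by rewrite mulr1 eXij.
Qed.
End A.


Section B.
Variable R : realType.
Local Notation C := (R[i]).

Lemma eig_root (X : 'M[C]_3) n a : X ^+ n = 1 -> root (char_poly X) a -> a ^+ n = 1.
Proof.
move=> Xn; rewrite -eigenvalue_root_char => /eigenvalueP[v Hv nz].
have Hk k : v *m X ^+ k = a ^+ k *: v.
  elim: k => [|k IH]; first by rewrite expr0 scale1r mulmx1.
  by rewrite exprS -mulmxE mulmxA Hv -scalemxAl IH scalerA -exprS.
move: (Hk n); rewrite Xn mulmx1 => /eqP; rewrite -subr_eq0 -{1}[v]scale1r.
by rewrite -scalerBl scaler_eq0 (negbTE nz) orbF subr_eq0 eq_sym => /eqP.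
Qed.

Lemma trace_roots (X : 'M[C]_3) n : X ^+ n = 1 ->
  exists a b c : C, [/\ a ^+ n = 1, b ^+ n = 1, c ^+ n = 1 & \tr X = a + b + c].
Proof.
move=> Xn.
have [r Dr] := closed_field_poly_normal (char_poly X).
rewrite (monicP (char_poly_monic X)) scale1r in Dr.
have sr : size r = 3%N.
  have := size_char_poly X; rewrite Dr size_prod_XsubC; by case.
case: r sr Dr => [|a [|b [|c [|]]]] //= _ Dr.
have rt z : z \in [:: a; b; c] -> root (char_poly X) z.
  by move=> zr; rewrite Dr root_prod_XsubC.
exists a, b, c; split; try by apply: (@eig_root X n _ Xn); apply: rt; rewrite !inE eqxx ?orbT.
have := char_poly_trace X (isT : (0 < 3)%N).
rewrite Dr !big_cons big_nil.
have -> : ('X - a%:P) * (('X - b%:P) * (('X - c%:P) * 1)) =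
   'X^3 - (a + b + c)%:P * 'X^2 + (a*b+b*c+c*a)%:P * 'X - (a*b*c)%:P :> {poly C}.
  rewrite !polyCD !polyCM; ring.
rewrite !coefE /=. by rewrite mulr1 mulr0 subr0 addr0 sub0r => /oppr_inj.
Qed.
End B.


Section D.
Variable R : realType.
Local Notation C := (R[i]).

Lemma prim_exists M : (0 < M)%N -> exists w : C, M.-primitive_root w.
Proof.
move=> M_gt0.
pose p : {poly C} := 'X^M - 1; have [r Dp] := closed_field_poly_normal p.
rewrite (monicP _) ?monicXnsubC // scale1r in Dp.
have rn1: all M.-unity_root r by apply/allP=> z; rewrite -root_prod_XsubC -Dp.
have sz_r: (M < (size r).+1)%N.
  by rewrite -(size_prod_XsubC r id) -Dp size_XnsubC.
have [|z] := hasP (cyclic.has_prim_root M_gt0 rn1 _ sz_r); last by exists z.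
by rewrite -separable_prod_XsubC -Dp separable_Xn_sub_1 // pnatr_eq0 -lt0n.
Qed.

Lemma Phi_dvd_Xn d : (0 < d)%N -> exists q : {poly int}, 'X^d - 1 = 'Phi_d * q.
Proof.
move=> d_gt0; rewrite -(prod_Cyclotomic d_gt0).
rewrite (big_rem d) /=; first by eexists.
exact: divisors_id.
Qed.

Lemma phi_root M (w : C) : M.-primitive_root w ->
  root (map_poly (intr : int -> C) 'Phi_M) w.
Proof.
move=> pw; have M_gt0 := prim_order_gt0 pw.
apply/negPn/negP => nr.
have : root (map_poly (intr : int -> C) ('X^M - 1)) w.
  by rewrite rmorphB /= rmorph1 map_polyXn /root !hornerE prim_expr_order // subrr.
rewrite -(prod_Cyclotomic M_gt0) rmorph_prod /root horner_prod.
apply/negP; rewrite prodf_seq_neq0; apply/allP => d dD; rewrite /= -/(root _ _).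
have dM : (d %| M)%N by rewrite dvdn_divisors.
have d_gt0 : (0 < d)%N := dvdn_gt0 M_gt0 dM.
have [->|ne] := eqVneq d M; first by [].
apply/negP => rd.
have [q Dq] := @Phi_dvd_Xn d d_gt0.
have : root (map_poly (intr : int -> C) ('X^d - 1)) w.
  by rewrite Dq rmorphM rootM rd.
rewrite rmorphB /= rmorph1 map_polyXn /root !hornerE subr_eq0 => /eqP wd.
move: (prim_order_dvd pw d); rewrite wd eqxx => /(dvdn_leq d_gt0) le.
have le' := dvdn_leq M_gt0 dM.
by move: ne; rewrite eqn_leq le le'.
Qed.



Lemma mapZQ (F : numFieldType) (P : {poly int}) :
  map_poly (intr : int -> F) P =
  map_poly (ratr : rat -> F) (map_poly (intr : int -> rat) P).
Proof. by rewrite -map_poly_comp; apply: eq_map_poly => a /=; rewrite ratr_int. Qed.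

Lemma irr_aux M (w : C) (Q : {poly int}) : M.-primitive_root w ->
  root (map_poly (intr : int -> C) Q) w ->
  exists h : {poly rat},
    map_poly (intr : int -> rat) Q = h * map_poly (intr : int -> rat) 'Phi_M.
Proof.
move=> pw rQ.
set Qq := map_poly (intr : int -> rat) Q.
set Pq := map_poly (intr : int -> rat) 'Phi_M.
set g := gcdp Qq Pq.
have Pq0 : Pq != 0.
  by rewrite -size_poly_eq0 size_map_inj_poly ?size_Cyclotomic //; exact: intr_inj.
have g0 : g != 0 by rewrite gcdp_eq0 negb_and Pq0 orbT.
have rg : root (map_poly (ratr : rat -> C) g) w.
  by rewrite gcdp_map root_gcd -!mapZQ rQ phi_root.
have sg : (1 < size g)%N.
  rewrite -(size_map_poly (ratr : {rmorphism rat -> C})).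
  apply: root_size_gt1 rg; by rewrite -size_poly_eq0 size_map_poly size_poly_eq0.
have [r rr] : exists r : algC, root (map_poly (ratr : rat -> algC) g) r.
  by apply/closed_rootP; rewrite size_map_poly; case: (size g) sg => [|[]].
have rPhi : root (map_poly (intr : int -> algC) 'Phi_M) r.
  by move: rr; rewrite gcdp_map root_gcd -!mapZQ => /andP[].
have [z0 pz0] := C_prim_root_exists (prim_order_gt0 pw).
have pr : M.-primitive_root r.
  by rewrite -(root_cyclotomic pz0) -(Cintr_Cyclotomic pz0).
have [p [Dp _] dv] := minCpolyP r.
have ep : p = Pq.
  apply: (map_inj_poly (fmorph_inj (ratr : {rmorphism rat -> algC})) (rmorph0 _)).
  by rewrite -Dp (minCpoly_cyclotomic pr) -(Cintr_Cyclotomic pr) mapZQ.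
have : (Pq %| Qq)%R.
  by apply: (dvdp_trans _ (dvdp_gcdl Qq Pq)); move: rr; rewrite dv ep.
by move/dvdpP => [h Dh]; exists h.
Qed.

Lemma irr M (w : C) (Q : {poly int}) : M.-primitive_root w ->
  root (map_poly (intr : int -> C) Q) w ->
  forall z : C, root (map_poly (intr : int -> C) 'Phi_M) z ->
  root (map_poly (intr : int -> C) Q) z.
Proof.
move=> pw rQ z rz; have [h Dh] := @irr_aux M w Q pw rQ.
by rewrite mapZQ Dh rmorphM /= -mapZQ rootM rz orbT.
Qed.
End D.


Section E.
Variable R : realType.
Local Notation C := (R[i]).
Local Notation pc P := (map_poly (intr : int -> C) P).

Lemma root_Phi_unit M (z : C) : (0 < M)%N -> root (pc 'Phi_M) z -> z ^+ M = 1.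
Proof.
move=> M_gt0 rz; have [q Dq] := @Phi_dvd_Xn M M_gt0.
have : root (pc ('X^M - 1)) z by rewrite Dq rmorphM rootM rz.
by rewrite rmorphB /= rmorph1 map_polyXn /root !hornerE subr_eq0 => /eqP.
Qed.

Lemma unit_norm1 M (z : C) : (0 < M)%N -> z ^+ M = 1 -> `|z| = 1.
Proof.
move=> M_gt0 zM; apply/eqP; rewrite -(pexpr_eq1 M_gt0) //.
by rewrite -normrX zM normr1.
Qed.

Lemma conj_pc (P : {poly int}) (z : C) : ((pc P).[z])^* = (pc P).[z^*].
Proof.
rewrite -horner_map /=; congr (_.[_]).
rewrite -map_poly_comp; apply: eq_map_poly => a /=.
exact: (rmorph_int (Num.conj : {rmorphism C -> C})).
Qed.

Lemma norm_pc_phi M (w : C) (P : {poly int}) : M.-primitive_root w ->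
  `|(pc P).[w]| = 1 -> forall z, root (pc 'Phi_M) z -> `|(pc P).[z]| = 1.
Proof.
move=> pw nw; have M_gt0 := prim_order_gt0 pw.
pose F := P * (P \Po 'X^(M.-1)) - 1.
have EF z : root (pc 'Phi_M) z -> (pc F).[z] = `|(pc P).[z]| ^+ 2 - 1.
  move=> rz; have zM := root_Phi_unit M_gt0 rz.
  have nz := unit_norm1 M_gt0 zM.
  rewrite normCK conj_pc rmorphB rmorphM /= rmorph1 map_comp_poly /= map_polyXn.
  rewrite hornerD hornerN hornerC hornerM horner_comp hornerXn; congr (_ * _.[_] - 1).
  have z0 : z != 0 by rewrite -normr_eq0 nz oner_neq0.
  have -> : z^* = z^-1 by rewrite invC_norm nz expr1n invr1 mul1r.
  apply: (mulfI z0); rewrite mulfV // -exprS prednK //.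
have rFw : root (pc F) w.
  by rewrite /root EF ?phi_root // nw expr1n subrr.
move=> z rz; have := irr pw rFw rz; rewrite /root EF // subr_eq0 => /eqP.
by move/eqP; rewrite sqrp_eq1 // => /eqP.
Qed.


Lemma core M (w : C) (P : {poly int}) : M.-primitive_root w ->
  `|(pc P).[w]| = 1 -> exists m, (0 < m)%N /\ ((pc P).[w]) ^+ m = 1.
Proof.
move=> pw nw; have M_gt0 := prim_order_gt0 pw.
have monPhi : 'Phi_M \is monic := Cyclotomic_monic M.
have [rs Drs] := closed_field_poly_normal (pc 'Phi_M).
rewrite (monicP (monic_map _ monPhi)) scale1r in Drs.
set d := size rs.
have sPhi : size 'Phi_M = d.+1.
  by rewrite -(size_map_inj_poly (@intr_inj C)) // Drs size_prod_XsubC.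
have urs : uniq rs.
  rewrite -separable_prod_XsubC -Drs.
  have [q Dq] := Phi_dvd_Xn M_gt0.
  apply: (@dvdp_separable _ ('X^M - 1)); last first.
    by apply: separable_Xn_sub_1; rewrite pnatr_eq0 -lt0n.
  have -> : ('X^M - 1 : {poly C}) = pc ('X^M - 1).
    by rewrite rmorphB /= rmorph1 map_polyXn.
  by rewrite Dq rmorphM dvdp_mulIl.
pose a : 'rV[C]_d := \row_j rs`_j.
have rootrs (j : 'I_d) : root (pc 'Phi_M) (a 0 j).
  by rewrite mxE Drs root_prod_XsubC mem_nth.
pose V := Vandermonde d a.
have uV : V \in unitmx.
  rewrite unitmxE unitfE det_Vandermonde; apply/prodf_neq0 => i _.
  apply/prodf_neq0 => j ij; rewrite !mxE subr_eq0; apply/negP => /eqP e.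
  have := nth_uniq 0 (ltn_ord j) (ltn_ord i) urs; rewrite e eqxx => /esym/eqP ji.
  by move: ij; rewrite ji ltnn.
pose W := invmx V.
pose Bc := \sum_(i < d) \sum_(j < d) `|W j i|.
pose Q m := Pdiv.Ring.rmodp (P ^+ m) 'Phi_M.
have sQ m : (size (Q m) <= d)%N.
  by rewrite -ltnS -sPhi Pdiv.Ring.ltn_rmodpN0 // monic_neq0.
have evQ m z : root (pc 'Phi_M) z -> (pc (Q m)).[z] = ((pc P).[z]) ^+ m.
  move=> rz; have := Pdiv.RingMonic.rdivp_eq monPhi (P ^+ m).
  move/(congr1 (fun p => (pc p).[z])).
  rewrite rmorphD rmorphM rmorphXn hornerD hornerM (rootP rz) mulr0 add0r.
  by rewrite horner_exp => ->.
have nz (j : 'I_d) : `|(pc P).[a 0 j]| = 1 by apply: (norm_pc_phi pw nw).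
pose cv m : 'rV[C]_d := \row_i ((Q m)`_i)%:~R.
have cvV m : cv m *m V = \row_j ((pc P).[a 0 j]) ^+ m.
  apply/rowP => j; rewrite [RHS]mxE -(evQ _ _ (rootrs j)) [LHS]mxE.
  have sQ' : (size (pc (Q m)) <= d)%N.
    by rewrite size_map_inj_poly // ?sQ //; exact: intr_inj.
  rewrite (horner_coef_wide _ sQ').
  by apply: eq_bigr => i _; rewrite !mxE coef_map.
have cvE m : cv m = (\row_j ((pc P).[a 0 j]) ^+ m) *m W.
  by rewrite -cvV mulmxK.
have bnd m (i : 'I_d) : `|((Q m)`_i)%:~R : C| <= Bc.
  have -> : ((Q m)`_i)%:~R = cv m 0 i by rewrite mxE.
  rewrite cvE mxE; apply: le_trans (ler_norm_sum _ _ _) _.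
  apply: (@le_trans _ _ (\sum_(j < d) `|W j i|)).
    by apply: ler_sum => j _; rewrite mxE normrM normrX nz expr1n mul1r.
  rewrite /Bc [X in _ <= X](bigD1 i) //= lerDl.
  by apply: sumr_ge0 => k _; apply: sumr_ge0.
have Bc0 : 0 <= Bc by apply: sumr_ge0 => i _; apply: sumr_ge0.
pose N := Num.Def.archi_bound (complex.Re Bc).
have BN : Bc <= N%:R.
  have ImB := ger0_Im Bc0.
  have ReB : 0 <= complex.Re Bc by move: Bc0; rewrite lecE => /andP[].
  rewrite lecE ImB raddfMn /= mul0rn eqxx /= raddfMn /=.
  exact: ltW (archi_boundP ReB).
have bndZ m i : (`|(Q m)`_i| <= N%:Z)%R.
  case: (ltnP i d) => [lid | gid].
    have := le_trans (bnd m (Ordinal lid)) BN.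
    by rewrite -intr_norm -[N%:R]/((N%:Z)%:~R : C) ler_int.
  by rewrite nth_default ?normr0 // (leq_trans (sQ m) gid).
pose f m : {ffun 'I_d -> 'I_(2 * N).+1} :=
  [ffun i : 'I_d => inord (absz ((Q m)`_i + N%:Z)%R)].
have [m1 [m2 [lt12 e12]]] := pigeon f.
have bnd2 m i : (absz ((Q m)`_i + N%:Z)%R < (2 * N).+1)%N /\ (0 <= (Q m)`_i + N%:Z)%R.
  by move: (bndZ m i); rewrite ler_norml => /andP[h1 h2]; split; lia.
have EQ : Q m1 = Q m2.
  apply/polyP => i; case: (ltnP i d) => [lid|gid]; last first.
    by rewrite !nth_default // (leq_trans (sQ _) gid).
  have := congr1 (fun g : {ffun 'I_d -> 'I_(2 * N).+1} => val (g (Ordinal lid))) e12; rewrite /f !ffunE /=.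
  case: (bnd2 m1 i) (bnd2 m2 i) => [? ?] [? ?].
  rewrite !inordK //.
  move/(congr1 (fun n : nat => n%:Z)); rewrite !gez0_abs //.
  by move/addIr.
have y0 : (pc P).[w] != 0 by rewrite -normr_eq0 nw oner_neq0.
exists (m2 - m1)%N; split; first by rewrite subn_gt0.
have rw := phi_root pw.
rewrite expfB // -!(evQ _ _ rw) EQ divff // (evQ _ _ rw) expf_neq0 //.
Qed.
End E.


Section F.
Variable R : realType.
Local Notation C := (R[i]).

Definition Sk (k : 'I_3) : 'M[C]_3 :=
  if k == 0 :> 'I_3 then S1 R else if k == 1 :> 'I_3 then S2 R else S3 R.

Lemma Sk_delta k : 1 + Sk k = 2%:R *: (delta_mx k k).
Proof.
apply/matrixP => i j; rewrite /Sk !mxE.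
case: k => [[|[|[|k]]] Hk] //; case: i => [[|[|[|i]]] Hi] //;
  case: j => [[|[|[|j]]] Hj] //; rewrite !mxE /=; ring.
Qed.

Lemma mul_delta_r (A : 'M[C]_3) l i j :
  (A *m delta_mx l l) i j = A i l * (j == l)%:R.
Proof.
rewrite mxE (bigD1 l) //= mxE eqxx /= big1 ?addr0 // => m ml.
by rewrite mxE (negbTE ml) mulr0.
Qed.

Lemma tr_delta (A : 'M[C]_3) k : \tr (A *m delta_mx k k) = A k k.
Proof.
rewrite /mxtrace (bigD1 k) //= mul_delta_r eqxx mulr1 big1 ?addr0 // => i ik.
by rewrite mul_delta_r (negbTE ik) mulr0.
Qed.

Lemma tr_delta2 (T : 'M[C]_3) k l :
  \tr (T *m delta_mx l l *m T *m delta_mx k k) = T k l * T l k.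
Proof.
rewrite tr_delta mxE (bigD1 l) //= mul_delta_r eqxx mulr1 big1 ?addr0 // => i il.
by rewrite mul_delta_r (negbTE il) mulr0 mul0r.
Qed.

Lemma diag_tr (T : 'M[C]_3) k : 2 * T k k = \tr T + \tr (T *m Sk k).
Proof.
rewrite -mxtraceD -[X in \tr (X + _)](mulmx1 T) -mulmxDr Sk_delta -scalemxAr.
by rewrite mxtraceZ tr_delta.
Qed.

Lemma off_tr (T : 'M[C]_3) k l : 4 * (T k l * T l k) =
  \tr (T *m T) + \tr (T *m T *m Sk k) + \tr (T *m Sk l *m T)
  + \tr (T *m Sk l *m T *m Sk k).
Proof.
rewrite -!mxtraceD.
have -> : T *m T + T *m T *m Sk k + T *m Sk l *m T + T *m Sk l *m T *m Sk k
   = T *m (1 + Sk l) *m T *m (1 + Sk k).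
  rewrite [RHS]mulmxDr mulmx1 [T *m (1 + Sk l)]mulmxDr mulmx1 !mulmxDl.
  by rewrite -!addrA; congr (_ + _); rewrite addrCA.
rewrite !Sk_delta -scalemxAr -scalemxAr -scalemxAl -scalemxAl !mxtraceZ tr_delta2; ring.
Qed.
End F.


Section G.
Variable R : realType.
Local Notation C := (R[i]).
Local Notation pc P := (map_poly (intr : int -> C) P).

Definition cyc (w y : C) := exists P : {poly int}, y = (pc P).[w].

Lemma cycD w x y : cyc w x -> cyc w y -> cyc w (x + y).
Proof. by move=> [P ->] [Q ->]; exists (P + Q); rewrite rmorphD hornerD. Qed.
Lemma cycM w x y : cyc w x -> cyc w y -> cyc w (x * y).
Proof. by move=> [P ->] [Q ->]; exists (P * Q); rewrite rmorphM hornerM. Qed.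
Lemma cycN w x : cyc w x -> cyc w (- x).
Proof. by move=> [P ->]; exists (- P); rewrite rmorphN hornerN. Qed.
Lemma cycX w k : cyc w (w ^+ k).
Proof. by exists 'X^k; rewrite map_polyXn hornerXn. Qed.
Lemma cyc_root M w z : M.-primitive_root w -> z ^+ M = 1 -> cyc w z.
Proof. by move=> pw /(prim_rootP pw)[i ->]; apply: cycX. Qed.

Lemma tr_cyc (G : seq 'M[C]_3) X : finite_unitary_group G -> X \in G ->
  exists n, (0 < n)%N /\ forall M w, M.-primitive_root w -> (n %| M)%N ->
    cyc w (\tr X).
Proof.
move=> fG XG; have [n [n_gt0 Xn]] := fin_order fG XG.
have [a [b [c [an bn cn ->]]]] := trace_roots Xn.
exists n; split => // M w pw nM.
have E z : z ^+ n = 1 -> z ^+ M = 1 by move=> zn; rewrite -(divnK nM) mulnC exprM zn expr1n.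
by apply: cycD; [apply: cycD|]; apply: (cyc_root pw); apply: E.
Qed.

Lemma sqrt5 M w : M.-primitive_root w -> (5 %| M)%N ->
  exists u v, [/\ cyc w u, cyc w v,
    2 * u = (Num.sqrt (5 : R))%:C%C - 1 & 2 * v = (Num.sqrt (5 : R))%:C%C + 1].
Proof.
move=> pw dM; have M_gt0 := prim_order_gt0 pw.
set e := w ^+ (M %/ 5).
have e5 : e ^+ 5 = 1 by rewrite -exprM divnK // prim_expr_order.
have e1 : e != 1.
  apply/eqP => /eqP; rewrite /e -(prim_order_dvd pw) => /dvdn_leq.
  have q_gt0 : (0 < M %/ 5)%N by rewrite divn_gt0 // dvdn_leq.
  move=> /(_ q_gt0); rewrite leqNgt ltn_Pdiv //.
have es : 1 + e + e ^+ 2 + e ^+ 3 + e ^+ 4 = 0.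
  have : (e - 1) * (1 + e + e ^+ 2 + e ^+ 3 + e ^+ 4) = 0.
    by rewrite -[RHS](subrr 1) -{3}e5; ring.
  by move/eqP; rewrite mulf_eq0 subr_eq0 (negbTE e1) /= => /eqP.
set A := e + e ^+ 4; set B := e ^+ 2 + e ^+ 3.
have AB : A + B = -1 by apply/eqP; rewrite -subr_eq0 opprK -es /A /B; apply/eqP; ring.
have A2 : A ^+ 2 = 2 + B.
  have -> : A ^+ 2 = e ^+ 2 + 2 * e ^+ 5 + e ^+ 5 * e ^+ 3 by rewrite /A; ring.
  by rewrite e5 /B; ring.
have B2 : B ^+ 2 = 2 + A.
  have -> : B ^+ 2 = e ^+ 4 + 2 * e ^+ 5 + e ^+ 5 * e by rewrite /B; ring.
  by rewrite e5 /A; ring.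
have AB2 : A * B = A + B.
  have -> : A * B = e ^+ 3 + e ^+ 4 + e ^+ 5 * e + e ^+ 5 * e ^+ 2 by rewrite /A /B; ring.
  by rewrite e5 /A /B; ring.
have s5 : (A - B) ^+ 2 = 5.
  have -> : (A - B) ^+ 2 = A ^+ 2 + B ^+ 2 - 2 * (A * B) by ring.
  rewrite A2 B2 AB2 -[2 + A]addrC addrA -[2 + B + A]addrA [B + A]addrC AB; ring.
set r := (Num.sqrt (5 : R))%:C%C.
have r2 : r ^+ 2 = 5.
  by rewrite /r -rmorphXn /= sqr_sqrtr ?ler0n // rmorph_nat.
have : (A - B - r) * (A - B + r) = 0.
  have -> : (A - B - r) * (A - B + r) = (A - B) ^+ 2 - r ^+ 2 by ring.
  by rewrite s5 r2 subrr.
have cA : cyc w A by rewrite /A /e -exprM; apply: cycD; apply: cycX.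
have cB : cyc w B by rewrite /B /e -!exprM; apply: cycD; apply: cycX.
move/eqP; rewrite mulf_eq0 => /orP[] /eqP H.
- have Er : r = A - B by apply/eqP; rewrite eq_sym -subr_eq0 H.
  exists A, (- B); split => //; first exact: cycN.
    have -> : 2 * A = (A - B) - 1 + ((A + B) + 1) by ring.
    by rewrite AB addNr addr0 -Er.
  have -> : 2 * (- B) = (A - B) + 1 + (- (A + B) - 1) by ring.
  by rewrite AB opprK subrr addr0 -Er.
- have Er : r = - (A - B).
    by apply/eqP; rewrite -addr_eq0 addrC H.
  exists B, (- A); split => //; first exact: cycN.
    have -> : 2 * B = - (A - B) - 1 + ((A + B) + 1) by ring.
    by rewrite AB addNr addr0 -Er.
  have -> : 2 * (- A) = - (A - B) + 1 + (- (A + B) - 1) by ring.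
  by rewrite AB opprK subrr addr0 -Er.
Qed.



Lemma r_facts : let r := (Num.sqrt (5 : R))%:C%C : C in
  [/\ r ^+ 2 = 5, `|r - 1| = r - 1 & `|r + 1| = r + 1].
Proof.
move=> r.
have r1 : 1 <= Num.sqrt (5 : R).
  by rewrite -[X in X <= _]sqrtr1 ler_sqrt ?ler1n ?ler0n.
split.
- by rewrite /r -rmorphXn /= sqr_sqrtr ?ler0n // rmorph_nat.
- apply: ger0_norm; rewrite /r -(rmorph1 (real_complex R)) -rmorphB /=.
  by rewrite lecR subr_ge0.
- apply: ger0_norm; rewrite /r -(rmorph1 (real_complex R)) -rmorphD /=.
  by rewrite lecR addr_ge0 // (le_trans _ r1).
Qed.

End G.

Ltac solve_dvd := repeat first [exact: dvdnn | apply: dvdn_mull; exact: dvdnn | apply: dvdn_mulr].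

Unset Implicit Arguments.

Theorem theorem3 (R : realType) (G : seq 'M[R[i]]_3) (T : 'M[R[i]]_3)
    (c : R[i]) :
  finite_unitary_group G ->
  S1 R \in G -> S2 R \in G -> S3 R \in G -> T \in G ->
  admissible_c c ->
  (forall j : 'I_3, `|T j j| = c ->
     exists xi : R[i], is_root_of_unity xi /\ T j j = c * xi) /\
  (forall k l : 'I_3, k != l -> `|T k l * T l k| = 4^-1 ->
     exists xi : R[i], is_root_of_unity xi /\ T k l * T l k = xi / 4).
Proof.
move=> fG S1G S2G S3G TG adm.
have GM : forall A B, A \in G -> B \in G -> A *m B \in G by case: fG.
have SkG k : Sk R k \in G by rewrite /Sk; case: ifP => _ //; case: ifP.
have [r2 rm1 rp1] := r_facts R.
set r := (Num.sqrt (5 : R))%:C%C in r2 rm1 rp1 adm *.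
have n4 : (4 : R[i]) != 0 by rewrite pnatr_eq0.
have key M (w : R[i]) xi : M.-primitive_root w -> cyc w xi -> `|xi| = 1 ->
    is_root_of_unity xi.
  by move=> pw [P ->] n; have [m [m0 hm]] := core pw n; exists m.
have E5 : (5 - 1 : R[i]) = 4 by ring.
split.
- move=> j nj.
  have [n1 [n1p H1]] := tr_cyc fG TG.
  have [n2 [n2p H2]] := tr_cyc fG (GM _ _ TG (SkG j)).
  pose M := (5 * n1 * n2)%N.
  have M_gt0 : (0 < M)%N by rewrite /M !muln_gt0 n1p n2p.
  have [w pw] := prim_exists R M_gt0.
  have cx : cyc w (2 * T j j).
    by rewrite diag_tr; apply: cycD; [apply: (H1 M) | apply: (H2 M)] => //; rewrite /M; solve_dvd.
  have d5 : (5 %| M)%N by rewrite /M; solve_dvd.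
  have [u [v [cu cv eu ev]]] := sqrt5 pw d5.
  case: adm => [Ec|[Ec|Ec]]; rewrite Ec in nj *.
  + exists (2 * T j j); split.
      by apply: (key _ _ _ pw cx); rewrite normrM nj normr_nat mulfV // pnatr_eq0.
    by rewrite mulrA mulVf ?mul1r // pnatr_eq0.
  + exists (2 * T j j * u); split.
      apply: (key _ _ _ pw); first exact: cycM.
      have -> : 2 * T j j * u = T j j * (2 * u) by ring.
      rewrite eu normrM nj rm1.
      have -> : (r + 1) / 4 * (r - 1) = (r ^+ 2 - 1) / 4 by ring.
      by rewrite r2 E5 mulfV.
    have -> : (r + 1) / 4 * (2 * T j j * u) = T j j * ((r + 1) * (2 * u)) / 4 by ring.
    rewrite eu.
    have -> : (r + 1) * (r - 1) = r ^+ 2 - 1 by ring.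
    by rewrite r2 E5 mulfK.
  + exists (2 * T j j * v); split.
      apply: (key _ _ _ pw); first exact: cycM.
      have -> : 2 * T j j * v = T j j * (2 * v) by ring.
      rewrite ev normrM nj rp1.
      have -> : (r - 1) / 4 * (r + 1) = (r ^+ 2 - 1) / 4 by ring.
      by rewrite r2 E5 mulfV.
    have -> : (r - 1) / 4 * (2 * T j j * v) = T j j * ((r - 1) * (2 * v)) / 4 by ring.
    rewrite ev.
    have -> : (r - 1) * (r + 1) = r ^+ 2 - 1 by ring.
    by rewrite r2 E5 mulfK.
- move=> k l _ nkl.
  have [n1 [n1p H1]] := tr_cyc fG (GM _ _ TG TG).
  have [n2 [n2p H2]] := tr_cyc fG (GM _ _ (GM _ _ TG TG) (SkG k)).
  have [n3 [n3p H3]] := tr_cyc fG (GM _ _ (GM _ _ TG (SkG l)) TG).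
  have [n4' [n4p H4]] := tr_cyc fG (GM _ _ (GM _ _ (GM _ _ TG (SkG l)) TG) (SkG k)).
  pose M := (n1 * n2 * n3 * n4')%N.
  have M_gt0 : (0 < M)%N by rewrite /M !muln_gt0 n1p n2p n3p n4p.
  have [w pw] := prim_exists R M_gt0.
  have cy : cyc w (4 * (T k l * T l k)).
    rewrite off_tr; apply: cycD; [apply: cycD; [apply: cycD|]|].
    - by apply: (H1 M) => //; rewrite /M; solve_dvd.
    - by apply: (H2 M) => //; rewrite /M; solve_dvd.
    - by apply: (H3 M) => //; rewrite /M; solve_dvd.
    - by apply: (H4 M) => //; rewrite /M; solve_dvd.
  exists (4 * (T k l * T l k)); split.
    by apply: (key _ _ _ pw cy); rewrite normrM nkl normr_nat mulfV.
  by rewrite [4 * _]mulrC mulfK.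
Qed.
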